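(* For any implicative frame $(X,\perp,Y,T)$, the algebra $(\mathcal{G}(X),\subseteq,\cap,\vee,\bot,X,\Rightarrow)$ of stable sets, where $\bot$ is the least stable set, $\vee$ the join in $\mathcal G(X)$ and $A\Rightarrow C={}'(A\blacktriangleright C')$, is an integral implicative lattice.
   Context: A sorted frame (polarity) is a triple $(X,\perp,Y)$ with $X,Y$ nonempty sets and ${\perp}\subseteq X\times Y$. For $U\subseteq X$ let $U'=\{y\in Y:\forall x\in U\ x\perp y\}$, and for $V\subseteq Y$ let ${}'V=\{x\in X:\forall y\in V\ x\perp y\}$. $A\subseteq X$ is stable if $A={}'(A')$; $B\subseteq Y$ is co-stable if $B=({}'B)'$. $\mathcal{G}(X)$, $\mathcal{G}(Y)$ are the complete lattices of stable, resp. co-stable, sets under inclusion (meets are intersections; joins are closures of unions, the closure of $W\subseteq X$ being ${}'(W')$ and of $W\subseteq Y$ being $W''=({}'W)'$). Preorders: for $x,z\in X$, $x\le z$ iff $\{x\}'\subseteq\{z\}'$; for $y,v\in Y$, $y\le v$ iff ${}'\{y\}\subseteq{}'\{v\}$; separated means both are partial orders. $\Gamma u$ is the set of elements above $u$. For $T\subseteq Y\times X\times Y$, its Galois dual $T'\subseteq X\times X\times Y$ is $uT'xv$ iff $\forall y\,(yTxv\Rightarrow u\perp y)$. An implicative frame is $(X,\perp,Y,T)$ with: (F0) $x\perp y$ iff $uT'xy$ for all $u\in X$; (F1) separated; (F2) each set $\{y: yTxv\}$ equals $\Gamma w$ for some $w\in Y$; (F3) if $yTxv$, $x_1\le x$,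 $v_1\le v$ then $yTx_1v_1$; (F4) for all $u,x\in X,v\in Y$, $\{x_1:uT'x_1v\}$ is stable and $\{v_1:uT'xv_1\}$ is co-stable. For $A\in\mathcal{G}(X)$, $B\in\mathcal{G}(Y)$: $A\blacktriangleright B=(\{y:\exists x\in A\,\exists v\in B\ yTxv\})''$. An integral implicative lattice is a bounded lattice with binary $\to$ satisfying (A1) $(a\vee b)\to c=(a\to c)\wedge(b\to c)$, (A2) $a\to(b\wedge c)=(a\to b)\wedge(a\to c)$, (A3) $a\le b$ iff $1\le a\to b$. *)

(* Defs.v *)
(* sets are predicates T -> Prop; set equality is Leibniz
   equality of predicates (provable via functional/propositional extensionality). *)
Set Implicit Arguments.

Section Polarity.
Variables (X Y : Type) (perp : X -> Y -> Prop).

Definition primeX (U : X -> Prop) : Y -> Prop := fun y => forall x, U x -> perp x y.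
Definition primeY (V : Y -> Prop) : X -> Prop := fun x => forall y, V y -> perp x y.

Definition subsetX (A B : X -> Prop) : Prop := forall x, A x -> B x.
Definition subsetY (A B : Y -> Prop) : Prop := forall y, A y -> B y.

Definition stableX (A : X -> Prop) : Prop := A = primeY (primeX A).
Definition costableY (B : Y -> Prop) : Prop := B = primeX (primeY B).

Definition leX (x z : X) : Prop := subsetY (primeX (fun u => u = x)) (primeX (fun u => u = z)).
Definition leY (y v : Y) : Prop := subsetX (primeY (fun w => w = y)) (primeY (fun w => w = v)).

Definition separated : Prop :=
  (forall x z, leX x z -> leX z x -> x = z) /\ (forall y v, leY y v -> leY v y -> y = v).

Definition GammaY (w : Y) : Y -> Prop := fun v => leY w v.

Variable T : Y -> X -> Y -> Prop.  (* T y x v  reads  yTxv *)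

Definition Tdual (u x : X) (v : Y) : Prop := forall y, T y x v -> perp u y.

Definition implicative_frame : Prop :=
  inhabited X /\ inhabited Y /\
  (* F0 *) (forall x y, perp x y <-> (forall u, Tdual u x y)) /\
  separated /\
  (forall x v, exists w, (fun y => T y x v) = GammaY w) /\
  (forall y x v x1 v1, T y x v -> leX x1 x -> leY v1 v -> T y x1 v1) /\
  (* F4 *) (forall u x v, stableX (fun x1 => Tdual u x1 v) /\ costableY (fun v1 => Tdual u x v1)).

Definition tri (A : X -> Prop) (B : Y -> Prop) : Y -> Prop :=
  primeX (primeY (fun y => exists x v, A x /\ B v /\ T y x v)).

Definition impl (A C : X -> Prop) : X -> Prop := primeY (tri A (primeX C)).

Definition meetX (A B : X -> Prop) : X -> Prop := fun x => A x /\ B x.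
Definition joinX (A B : X -> Prop) : X -> Prop := primeY (primeX (fun x => A x \/ B x)).
Definition topX : X -> Prop := fun _ => True.
Definition botX : X -> Prop := primeY (primeX (fun _ => False)).

End Polarity.

(* Main.v *)
Require Import Defs.
From Stdlib Require Import FunctionalExtensionality PropExtensionality.

Section H.
Variables (X Y : Type) (perp : X -> Y -> Prop).

Lemma extX (A B : X -> Prop) : (forall x, A x <-> B x) -> A = B.
Proof. intro H; extensionality x; apply propositional_extensionality; auto. Qed.

Lemma triple (V : Y -> Prop) x : primeY perp (primeX perp (primeY perp V)) x <-> primeY perp V x.
Proof. unfold primeY, primeX; firstorder. Qed.

Lemma stab_primeY (V : Y -> Prop) : stableX perp (primeY perp V).
Proof. unfold stableX; apply extX; intro; rewrite triple; tauto. Qed.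

Lemma inclX (U : X -> Prop) : subsetX U (primeY perp (primeX perp U)).
Proof. unfold subsetX, primeY, primeX; firstorder. Qed.

Lemma monoX (U W : X -> Prop) : subsetX U W ->
  subsetX (primeY perp (primeX perp U)) (primeY perp (primeX perp W)).
Proof. unfold subsetX, primeY, primeX; firstorder. Qed.

Lemma closX (U W : X -> Prop) : stableX perp W -> subsetX U W ->
  subsetX (primeY perp (primeX perp U)) W.
Proof. intros HW H x Hx. rewrite HW. unfold stableX in HW; exact (monoX U W H x Hx). Qed.

Lemma monoY (U W : Y -> Prop) : subsetY U W ->
  subsetY (primeX perp (primeY perp U)) (primeX perp (primeY perp W)).
Proof. unfold subsetY, primeY, primeX; firstorder. Qed.

Lemma closY (U W : Y -> Prop) : costableY perp W -> subsetY U W ->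
  subsetY (primeX perp (primeY perp U)) W.
Proof. intros HW H y Hy. rewrite HW. exact (monoY U W H y Hy). Qed.

Variable T : Y -> X -> Y -> Prop.

Lemma impl_char A C u : impl perp T A C u <->
  (forall x v, A x -> primeX perp C v -> Tdual perp T u x v).
Proof.
  unfold impl, tri. rewrite triple. unfold primeY, Tdual. firstorder eauto 10.
Qed.

End H.
Arguments closX {X Y perp U W}.
Arguments closY {X Y perp U W}.
Arguments inclX {X Y perp U}.
Arguments monoX {X Y perp U W}.
Arguments stab_primeY {X Y perp V}.
Arguments impl_char {X Y perp T A C u}.

Theorem corollary3p7 (X Y : Type) (perp : X -> Y -> Prop) (T : Y -> X -> Y -> Prop) :
  implicative_frame perp T ->
  (* bounded lattice structure of G(X): top, bottom, meets, joins *)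
  stableX perp (@topX X) /\
  stableX perp (botX perp) /\
  (forall A, stableX perp A -> subsetX (botX perp) A /\ subsetX A (@topX X)) /\
  (forall A B, stableX perp A -> stableX perp B ->
     stableX perp (meetX A B) /\
     subsetX (meetX A B) A /\ subsetX (meetX A B) B /\
     (forall C, stableX perp C -> subsetX C A -> subsetX C B -> subsetX C (meetX A B)) /\
     stableX perp (joinX perp A B) /\
     subsetX A (joinX perp A B) /\ subsetX B (joinX perp A B) /\
     (forall C, stableX perp C -> subsetX A C -> subsetX B C -> subsetX (joinX perp A B) C)) /\
  (* => is an operation on G(X) *)
  (forall A C, stableX perp A -> stableX perp C -> stableX perp (impl perp T A C)) /\
  (* A1 *)
  (forall A B C, stableX perp A -> stableX perp B -> stableX perp C ->
     impl perp T (joinX perp A B) C = meetX (impl perp T A C) (impl perp T B C)) /\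
  (* A2 *)
  (forall A B C, stableX perp A -> stableX perp B -> stableX perp C ->
     impl perp T A (meetX B C) = meetX (impl perp T A B) (impl perp T A C)) /\
  (* A3 *)
  (forall A B, stableX perp A -> stableX perp B ->
     (subsetX A B <-> subsetX (@topX X) (impl perp T A B))).
Proof.
  intros (_ & _ & F0 & _ & _ & _ & F4).
  split; [|split; [|split; [|split; [|split; [|split; [|split]]]]]].
  - unfold stableX. apply extX; intro x; split; intro H.
    + unfold primeY, primeX; firstorder.
    + exact I.
  - apply stab_primeY.
  - intros A HA; split.
    + apply closX; auto. intros x [].
    + intros x _; exact I.
  - intros A B HA HB.
    split; [|split; [|split; [|split; [|split; [|split; [|split]]]]]].
    + unfold stableX. apply extX; intro x; split; intro H.
      * apply inclX; exact H.
      * split; [apply (closX (U:=meetX A B) HA) | apply (closX (U:=meetX A B) HB)];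
          try (intros z [? ?]; assumption); exact H.
    + intros x [? ?]; auto.
    + intros x [? ?]; auto.
    + intros C _ H1 H2 x Hx; split; auto.
    + apply stab_primeY.
    + intros x Hx; apply inclX; auto.
    + intros x Hx; apply inclX; auto.
    + intros C HC H1 H2. apply closX; auto. intros x [?|?]; auto.
  - intros; apply stab_primeY.
  - intros A B C HA HB HC. apply extX; intro u. unfold meetX.
    rewrite !impl_char. split.
    + intro H; split; intros x v Hx Hv; apply H; auto; apply inclX; auto.
    + intros [H1 H2] x v Hx Hv.
      destruct (F4 u x v) as [S1 _].
      assert (Hs : subsetX (fun x => A x \/ B x) (fun x1 => Tdual perp T u x1 v)).
      { intros z [?|?]; auto. }
      exact (closX S1 Hs x Hx).
  - intros A B C HA HB HC. apply extX; intro u. unfold meetX.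
    rewrite !impl_char. split.
    + intro H; split; intros x v Hx Hv; apply H; auto; intros z [? ?]; auto.
    + intros [H1 H2] x v Hx Hv.
      destruct (F4 u x v) as [_ S2].
      assert (Hs : subsetY (fun v => primeX perp B v \/ primeX perp C v)
                           (fun v1 => Tdual perp T u x v1)).
      { intros z [?|?]; auto. }
      apply (closY S2 Hs v).
      intros z Hz. apply Hv. split.
      * rewrite HB. intros y Hy. apply Hz. left. exact Hy.
      * rewrite HC. intros y Hy. apply Hz. right. exact Hy.
  - intros A B HA HB. split.
    + intros H u _. rewrite impl_char. intros x v Hx Hv.
      apply (proj1 (F0 x v)). apply H in Hx. rewrite HB in Hx. apply Hx. exact Hv.
    + intros H x Hx. rewrite HB. intros v Hv. apply (proj2 (F0 x v)).
      intro u. specialize (H u I). rewrite impl_char in H. auto.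
Qed.
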